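(* Let $G$ be the line graph of a bipartite graph. Then $p(G)\le 2$.
   Context: The line graph of a graph $H$ has the edges of $H$ as vertices, two being adjacent iff the corresponding edges of $H$ share a vertex. A comparability graph is a graph admitting a transitive orientation. $p(G)$ is the minimum number $m$ such that $E(G)$ is the union of the edge sets of $m$ pairwise edge-disjoint comparability subgraphs of $G$. *)

(* Defs.v *)
(* Finite simple graphs as irreflexive symmetric relations
   on a finType. *)
From mathcomp Require Import all_boot.
Set Implicit Arguments. Unset Strict Implicit. Unset Printing Implicit Defensive.

Definition bipartite (V : finType) (h : rel V) : Prop :=
  exists c : V -> bool, forall x y, h x y -> c x != c y.

Definition is_edge (V : finType) (h : rel V) (A : {set V}) : bool :=
  [exists x, exists y, h x y && (A == [set x; y])].

Definition edge_type (V : finType) (h : rel V) := {A : {set V} | is_edge h A}.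

Definition line_adj (V : finType) (h : rel V) : rel (edge_type h) :=
  fun a b => (val a != val b) && (val a :&: val b != set0).

Definition transitive_orientation (T : finType) (e o : rel T) : Prop :=
  [/\ forall x y, o x y -> e x y,
      forall x y, e x y -> o x y || o y x,
      forall x y, o x y -> ~~ o y x
    & transitive o].

Definition comparability (T : finType) (e : rel T) : Prop :=
  exists o : rel T, transitive_orientation e o.

(* E(G) is the union of the edge sets of m pairwise edge-disjoint
   comparability subgraphs of G (subgraphs given by their edge sets,
   i.e. symmetric subrelations of e). *)
Definition comp_cover (T : finType) (e : rel T) (m : nat) : Prop :=
  exists F : 'I_m -> rel T,
    [/\ forall i, [/\ forall x y, F i x y -> e x y, symmetric (F i)
                     & comparability (F i)],
        forall i j x y, i != j -> F i x y -> ~~ F j x y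
      & forall x y, e x y -> exists i, F i x y].

Arguments line_adj {V} h.
Arguments edge_type {V} h.

(* Main.v *)
Require Import Defs.
From mathcomp Require Import all_boot.
Set Implicit Arguments. Unset Strict Implicit. Unset Printing Implicit Defensive.

Lemma same_col (V : finType) (h : rel V) (c : V -> bool)
  (Hc : forall x y, h x y -> c x != c y) (A : {set V}) :
  is_edge h A -> forall v1 v2, v1 \in A -> v2 \in A -> c v1 = c v2 -> v1 = v2.
Proof.
move=> /existsP[p /existsP[q /andP[hpq /eqP ->]]] v1 v2.
have := Hc _ _ hpq.
rewrite !inE => npq /orP[]/eqP-> /orP[]/eqP-> // E; by rewrite E eqxx in npq.
Qed.

Theorem theorem4 (V : finType) (h : rel V) :
  irreflexive h -> symmetric h -> bipartite h ->
  exists m, m <= 2 /\ comp_cover (line_adj h) m.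
Proof.
move=> _ _ [c Hc].
pose Fb (b : bool) : rel (edge_type h) := fun x y =>
  (val x != val y) && [exists v, [&& v \in val x, v \in val y & c v == b]].
have Fsym b : symmetric (Fb b).
  move=> x y; rewrite /Fb eq_sym; congr (_ && _).
  by apply/existsP/existsP => -[v /and3P[a1 a2 a3]]; exists v; rewrite a1 a2 a3.
have Fe b x y : Fb b x y -> line_adj h x y.
  case/andP=> ne /existsP[v /and3P[a1 a2 _]]; rewrite /line_adj ne /=.
  by apply/set0Pn; exists v; rewrite inE a1 a2.
exists 2; split=> //.
exists (fun i : 'I_2 => Fb (val i == 0)); split.
- move=> i; split; [exact: Fe | exact: Fsym |].
  set b := (val i == 0).
  exists (fun x y => Fb b x y && (enum_rank x < enum_rank y)); split.
  + by move=> x y /andP[].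
  + move=> x y Fxy; rewrite Fxy (Fsym b y x) Fxy /=.
    case: (ltngtP (enum_rank x) (enum_rank y)) => // /val_inj/enum_rank_inj xy.
    by move: Fxy; rewrite xy /Fb eqxx.
  + move=> x y /andP[_ l]; rewrite negb_and; apply/orP; right.
    by rewrite -leqNgt ltnW.
  + move=> y x z /andP[/andP[_ /existsP[v1 /and3P[a1 a2 /eqP a3]]] l1]
               /andP[/andP[_ /existsP[v2 /and3P[b1 b2 /eqP b3]]] l2].
    have e12 : v1 = v2 by apply: (same_col Hc (valP y)) => //; rewrite a3 b3.
    have lxz := ltn_trans l1 l2.
    rewrite lxz andbT /Fb; apply/andP; split.
      apply/negP=> /eqP/val_inj xz; by rewrite xz ltnn in lxz.
    apply/existsP; exists v1; rewrite a1 e12 b2 /=; apply/eqP; congruence.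
- move=> i j x y ij.
  have bij : (val i == 0) != (val j == 0).
    by move: ij; case: i => -[|[|k]] Hi; case: j => -[|[|k']] Hj.
  move=> /andP[ne /existsP[v1 /and3P[a1 a2 /eqP a3]]].
  apply/negP=> /andP[_ /existsP[v2 /and3P[b1 b2 /eqP b3]]].
  have cv : c v1 != c v2.
    by rewrite a3 b3.
  have memx w : w \in val x -> (w == v1) || (w == v2).
    move=> wx; case E: (c w == c v1).
      by rewrite (same_col Hc (valP x) wx a1 (eqP E)) eqxx.
    have : c w = c v2 by move: E cv; case: (c w); case: (c v1); case: (c v2).
    by move/(same_col Hc (valP x) wx b1)->; rewrite eqxx orbT.
  have memy w : w \in val y -> (w == v1) || (w == v2).
    move=> wx; case E: (c w == c v1).
      by rewrite (same_col Hc (valP y) wx a2 (eqP E)) eqxx.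
    have : c w = c v2 by move: E cv; case: (c w); case: (c v1); case: (c v2).
    by move/(same_col Hc (valP y) wx b2)->; rewrite eqxx orbT.
  move/negP: ne; apply; apply/eqP/setP=> w; apply/idP/idP.
    by move/memx/orP=> [] /eqP->.
  by move/memy/orP=> [] /eqP->.
- move=> x y /andP[ne /set0Pn[v]]; rewrite inE => /andP[vx vy].
  exists (if c v then ord0 else ord_max).
  rewrite /Fb ne /=; apply/existsP; exists v; rewrite vx vy /=.
  by case: (c v).
Qed.
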